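(* Let $G$ be a finite subgroup of $\mathrm{PGL}_2(\mathbb{Q})$. Then $\mathcal{O}$ is infinite if and only if there exist $a,b\in\mathbb{Q}$ with $a^2\neq b^2$ such that $G$ is a subgroup of $$\left\{I,\ \begin{pmatrix}0&1\\1&0\end{pmatrix},\ \begin{pmatrix}a&b\\-b&-a\end{pmatrix},\ \begin{pmatrix}b&a\\-a&-b\end{pmatrix}\right\}\subset\mathrm{PGL}_2(\mathbb{Q}).$$
   Context: Elements $\sigma=\begin{pmatrix}a&b\\c&d\end{pmatrix}\in\mathrm{PGL}_2(\mathbb{Q})$ (matrices up to nonzero scalars) act on $\hat{\mathbb{C}}=\mathbb{C}\cup\{\infty\}$ as Möbius transformations $\sigma(z)=\frac{az+b}{cz+d}$. $\mathcal{O}$ is the set of those orbits $O$ of $G$ acting on $\hat{\mathbb{C}}$ such that every $z\in O$ satisfies $z=0$ or $|z|=1$. *)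

(* Defs.v *)
(* complex numbers modelled as R * R, PGL_2(Q) via rational real matrices. *)
From Stdlib Require Import Reals QArith Qreals List.
Open Scope R_scope.

Definition is_rat (x : R) : Prop := exists q : Q, x = Q2R q.

Record M2 := mkM { ma : R; mb : R; mc : R; md : R }.

Definition ratM (A : M2) : Prop :=
  is_rat (ma A) /\ is_rat (mb A) /\ is_rat (mc A) /\ is_rat (md A).

Definition detM (A : M2) : R := ma A * md A - mb A * mc A.

Definition mulM (A B : M2) : M2 :=
  mkM (ma A * ma B + mb A * mc B) (ma A * mb B + mb A * md B)
      (mc A * ma B + md A * mc B) (mc A * mb B + md A * md B).

Definition scaleM (k : R) (A : M2) : M2 :=
  mkM (k * ma A) (k * mb A) (k * mc A) (k * md A).

Definition idM : M2 := mkM 1 0 0 1.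

Definition peq (A B : M2) : Prop := exists k : R, k <> 0 /\ B = scaleM k A.

(* S is the full preimage in GL_2(Q) of a subgroup of PGL_2(Q) *)
Definition is_PGL2Q_subgroup (S : M2 -> Prop) : Prop :=
  (forall A, S A -> ratM A /\ detM A <> 0) /\
  (forall A B, S A -> ratM B -> peq A B -> S B) /\
  S idM /\
  (forall A B, S A -> S B -> S (mulM A B)) /\
  (forall A, S A -> exists B, S B /\ peq (mulM A B) idM).

Definition PGL_finite (S : M2 -> Prop) : Prop :=
  exists l : list M2, forall A, S A -> exists B, In B l /\ peq A B.

Definition C := (R * R)%type.
Definition Cadd (z w : C) : C := (fst z + fst w, snd z + snd w).
Definition Cmul (z w : C) : C :=
  (fst z * fst w - snd z * snd w, fst z * snd w + snd z * fst w).
Definition Cinv (z : C) : C :=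
  let n := fst z * fst z + snd z * snd z in (fst z / n, - snd z / n).
Definition Cdiv (z w : C) : C := Cmul z (Cinv w).
Definition Cr (x : R) : C := (x, 0).
Definition Cnorm2 (z : C) : R := fst z * fst z + snd z * snd z.

(* Riemann sphere: None = infinity *)
Definition Chat := option C.

(* Moebius action z |-> (az+b)/(cz+d) *)
Definition act (A : M2) (z : Chat) : Chat :=
  match z with
  | None => if Req_EM_T (mc A) 0 then None else Some (Cr (ma A / mc A))
  | Some w =>
      let den := Cadd (Cmul (Cr (mc A)) w) (Cr (md A)) in
      if Req_EM_T (Cnorm2 den) 0 then None
      else Some (Cdiv (Cadd (Cmul (Cr (ma A)) w) (Cr (mb A))) den)
  end.

Definition same_orbit (S : M2 -> Prop) (z w : Chat) : Prop :=
  exists A, S A /\ act A z = w.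

(* the orbit of z belongs to the family O: each point is 0 or on the unit circle *)
Definition good_orbit (S : M2 -> Prop) (z : Chat) : Prop :=
  forall w, same_orbit S z w ->
    exists u : C, w = Some u /\ (u = (0, 0) \/ Cnorm2 u = 1).

(* O is infinite: no finite list of points represents all orbits in O *)
Definition O_infinite (S : M2 -> Prop) : Prop :=
  ~ exists l : list Chat,
      forall z, good_orbit S z -> exists w, In w l /\ same_orbit S w z.

(* Main.v *)
Require Import Defs.
From Stdlib Require Import Reals QArith Qreals List Lra Lia Classical FinFun.
Open Scope R_scope.
Import ListNotations.


Lemma Cnorm2_div z w : Cnorm2 w <> 0 -> Cnorm2 (Cdiv z w) = Cnorm2 z / Cnorm2 w.
Proof. destruct z as [z1 z2], w as [w1 w2]; unfold Cnorm2, Cdiv, Cmul, Cinv; simpl.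
intro H. field. exact H. Qed.

Lemma num_norm a b x y :
  Cnorm2 (Cadd (Cmul (Cr a) (x,y)) (Cr b)) = a*a*(x*x+y*y) + 2*a*b*x + b*b.
Proof. unfold Cnorm2, Cadd, Cmul, Cr; simpl; ring. Qed.

Lemma act_circle A x y v : x*x+y*y = 1 -> act A (Some (x,y)) = Some v ->
  mc A * mc A + 2 * mc A * md A * x + md A * md A <> 0 /\
  Cnorm2 v * (mc A * mc A + 2 * mc A * md A * x + md A * md A)
   = ma A * ma A + 2 * ma A * mb A * x + mb A * mb A.
Proof.
intros Hc. unfold act. destruct (Req_EM_T _ _) as [E|E]; [discriminate|].
intro H; injection H; clear H; intro H; subst v.
rewrite num_norm in E. rewrite Hc in E.
rewrite Cnorm2_div by (rewrite num_norm; rewrite Hc; exact E).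
rewrite !num_norm, Hc. split.
- intro; apply E; lra.
- field. intro; apply E; lra.
Qed.

Lemma sq_nonzero a b x y : x*x+y*y = 1 -> a*a <> b*b -> a*a + 2*a*b*x + b*b <> 0.
Proof.
intros Hc Hab H.
assert (H1 : (a + b*x)*(a+b*x) + (b*y)*(b*y) = 0).
{ replace ((a + b*x)*(a+b*x) + (b*y)*(b*y)) with (a*a + 2*a*b*x + b*b*(x*x+y*y)) by ring.
  rewrite Hc; lra. }
assert (H2 : a + b*x = 0) by nra.
assert (H3 : b*y = 0) by nra.
destruct (Req_dec b 0) as [Hb|Hb].
- subst b. apply Hab. nra.
- assert (y = 0).
  { apply Rmult_integral in H3; destruct H3; [contradiction|assumption]. }
  subst y. apply Hab. assert (a = - b*x) by lra. subst a. nra.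
Qed.

Lemma act_circle_pres a b c d x y : x*x+y*y = 1 -> c*c = b*b -> d*d = a*a ->
  c*d = a*b -> a*a <> b*b ->
  exists v, act (mkM a b c d) (Some (x,y)) = Some v /\ Cnorm2 v = 1.
Proof.
intros Hc H1 H2 H3 Hab. unfold act; simpl.
destruct (Req_EM_T _ _) as [E|E].
- exfalso. rewrite num_norm, Hc in E. apply (sq_nonzero a b x y Hc Hab).
  rewrite <- E, H1, H2. replace (2*c*d*x) with (2*(c*d)*x) by ring; rewrite H3; ring.
- eexists; split; [reflexivity|].
  rewrite Cnorm2_div by exact E. rewrite !num_norm, Hc.
  rewrite num_norm, Hc in E.
  replace (c * c * 1 + 2 * c * d * x + d * d) with (a * a * 1 + 2 * a * b * x + b * b) in *
    by (rewrite H1, H2; replace (2*c*d*x) with (2*(c*d)*x) by ring; rewrite H3; ring).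
  field. intro; apply E; lra.
Qed.

Lemma act_scale k A z : k <> 0 -> act (scaleM k A) z = act A z.
Proof.
intro Hk. destruct A as [a b c d]; destruct z as [[x y]|]; unfold act; simpl.
- destruct (Req_EM_T _ _) as [E1|E1]; destruct (Req_EM_T _ _) as [E2|E2]; auto.
  + exfalso. apply E2. unfold Cnorm2, Cadd, Cmul, Cr in *; simpl in *.
    apply (Rmult_eq_reg_l (k*k)); [|apply Rmult_integral_contrapositive; auto].
    rewrite Rmult_0_r; etransitivity; [|exact E1]; ring.
  + exfalso. apply E1. unfold Cnorm2, Cadd, Cmul, Cr in *; simpl in *.
    replace ((k * c * x - 0 * y + k * d) * (k * c * x - 0 * y + k * d) +
      (k * c * y + 0 * x + 0) * (k * c * y + 0 * x + 0)) with
      (k*k*((c*x - 0*y + d)*(c*x-0*y+d) + (c*y+0*x+0)*(c*y+0*x+0))) by ring.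
    rewrite E2; ring.
  + f_equal. unfold Cnorm2, Cdiv, Cadd, Cmul, Cinv, Cr in *; simpl in *.
    f_equal; field; repeat split; intro; first [apply E1; lra | apply E2; lra | auto].
- destruct (Req_EM_T _ _) as [E1|E1]; destruct (Req_EM_T _ _) as [E2|E2]; auto.
  + exfalso. apply Rmult_integral in E1; destruct E1; auto.
  + exfalso. apply E1. subst. ring.
  + f_equal. unfold Cr. f_equal. field. auto.
Qed.

Lemma act_peq A B z : peq A B -> act B z = act A z.
Proof. intros [k [Hk ->]]. apply act_scale; auto. Qed.

Lemma act_id z : act idM z = z.
Proof.
destruct z as [[x y]|]; unfold act, idM; simpl.
- destruct (Req_EM_T _ _) as [E|E].
  + exfalso. unfold Cnorm2, Cadd, Cmul, Cr in E; simpl in E. apply R1_neq_R0. nra.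
  + unfold Cnorm2, Cdiv, Cadd, Cmul, Cinv, Cr in *; simpl in *. f_equal. f_equal; field; auto.
- destruct (Req_EM_T _ _); [reflexivity| lra].
Qed.

Lemma small_avoid (L : list R) : exists e, 0 < e /\ forall x, 0 < x < e -> ~ In x L.
Proof.
induction L as [|y L [e [He H]]].
- exists 1; split; [lra|]. intros x _ [].
- destruct (Rle_lt_dec y 0) as [Hy|Hy].
  + exists e; split; auto. intros x Hx [E|E]; [lra| exact (H x Hx E)].
  + exists (Rmin e y); split; [apply Rmin_glb_lt; auto|].
    intros x Hx [E|E].
    * subst. pose proof (Rmin_r e x). lra.
    * pose proof (Rmin_l e y). apply (H x); auto; lra.
Qed.

Lemma circle_avoid (L : list R) : exists x y, x*x+y*y = 1 /\ ~ In x L.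
Proof.
destruct (small_avoid L) as [e [He H]].
set (x := Rmin e 1 / 2).
assert (Hx1 : 0 < Rmin e 1) by (apply Rmin_glb_lt; lra).
pose proof (Rmin_l e 1). pose proof (Rmin_r e 1).
exists x, (sqrt (1 - x*x)). split.
- rewrite sqrt_sqrt. ring. unfold x. nra.
- apply H. unfold x. lra.
Qed.

Definition mats (a b : R) : list M2 :=
  [idM; mkM 0 1 1 0; mkM a b (-b) (-a); mkM b a (-a) (-b)].

Lemma dir1 (S : M2 -> Prop) (a b : R) : a ^ 2 <> b ^ 2 ->
  (forall A, S A ->
       peq A idM \/ peq A (mkM 0 1 1 0) \/
       peq A (mkM a b (- b) (- a)) \/ peq A (mkM b a (- a) (- b))) ->
  O_infinite S.
Proof.
intros Hab HS [l Hl].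
assert (Hab' : a*a <> b*b) by (intro E; apply Hab; simpl; nra).
assert (Hcl : forall A, S A -> exists M, In M (mats a b) /\ forall z, act A z = act M z).
{ intros A HA. destruct (HS A HA) as [P|[P|[P|P]]]; eexists; split;
  try (intro z; symmetry; apply act_peq; exact P); simpl; tauto. }
set (L := flat_map (fun w => map (fun M => match act M w with Some p => fst p | None => 0 end) (mats a b)) l).
destruct (circle_avoid L) as [x [y [Hc Hn]]].
assert (Hg : good_orbit S (Some (x,y))).
{ intros w [A [HA Hw]]. destruct (Hcl A HA) as [M [HM HMz]]. rewrite HMz in Hw.
  simpl in HM.
  destruct HM as [<-|[<-|[<-|[<-|[]]]]].
  - destruct (act_circle_pres 1 0 0 1 x y) as [v [Hv1 Hv2]]; try assumption; try ring; try lra.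
    exists v; split; [rewrite <- Hw; exact Hv1|auto].
  - destruct (act_circle_pres 0 1 1 0 x y) as [v [Hv1 Hv2]]; try assumption; try ring; try lra.
    exists v; split; [rewrite <- Hw; exact Hv1|auto].
  - destruct (act_circle_pres a b (-b) (-a) x y) as [v [Hv1 Hv2]]; try assumption; try ring; try lra.
    exists v; split; [rewrite <- Hw; exact Hv1|auto].
  - destruct (act_circle_pres b a (-a) (-b) x y) as [v [Hv1 Hv2]]; try assumption; try ring; try lra.
    exists v; split; [rewrite <- Hw; exact Hv1|auto]. }
destruct (Hl _ Hg) as [w [Hwl [A [HA Hw]]]].
destruct (Hcl A HA) as [M [HM HMz]]. rewrite HMz in Hw.
apply Hn. unfold L. apply in_flat_map. exists w; split; auto.
apply in_map_iff. exists M; split; auto. rewrite Hw. reflexivity.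
Qed.

Lemma y_pm x y : x*x+y*y = 1 -> y = sqrt (1-x*x) \/ y = - sqrt (1-x*x).
Proof.
intro H. replace (1 - x*x) with (Rsqr y) by (unfold Rsqr; lra).
rewrite sqrt_Rsqr_abs. unfold Rabs; destruct (Rcase_abs y); [right|left]; lra.
Qed.

Lemma sq_eq p q : p*p = q*q -> p = q \/ p = -q.
Proof.
intro H. assert ((p-q)*(p+q) = 0) by lra. apply Rmult_integral in H0.
destruct H0; [left|right]; lra.
Qed.

Lemma circle_pres (S : M2 -> Prop) : is_PGL2Q_subgroup S -> O_infinite S ->
  forall A, S A -> (mc A = mb A /\ md A = ma A) \/ (mc A = - mb A /\ md A = - ma A).
Proof.
intros [Hrat [_ [Hid [Hmul Hinv]]]] Hinf A HA.
pose proof (proj2 (Hrat A HA)) as Hdet.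
destruct A as [a b c d]; simpl in *. unfold detM in Hdet; simpl in Hdet.
assert (Hab : ~ (a = 0 /\ b = 0)) by (intros [-> ->]; apply Hdet; ring).
destruct (classic (a*a+b*b-c*c-d*d = 0 /\ 2*(a*b-c*d) = 0)) as [[E1 E2]|NE].
- assert (F1 : (a+b)*(a+b) = (c+d)*(c+d)) by nra.
  assert (F2 : (a-b)*(a-b) = (c-d)*(c-d)) by nra.
  apply sq_eq in F1; apply sq_eq in F2.
  destruct F1, F2.
  + exfalso. apply Hdet. assert (c = a) by lra. assert (d = b) by lra. subst; ring.
  + left; split; lra.
  + right; split; lra.
  + exfalso. apply Hdet. assert (c = -a) by lra. assert (d = -b) by lra. subst; ring.
- exfalso. apply Hinf.
  set (al := a*a+b*b-c*c-d*d). set (be := 2*(a*b-c*d)).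
  set (x1 := - al / be). set (x2 := - (a*a+b*b) / (2*a*b)).
  exists [Some (0,0); Some (x1, sqrt (1-x1*x1)); Some (x1, - sqrt (1-x1*x1));
          Some (x2, sqrt (1-x2*x2)); Some (x2, - sqrt (1-x2*x2))].
  intros z Hz. exists z; split; [| exists idM; split; [exact Hid| apply act_id]].
  destruct (Hz z) as [u [-> Hu]]; [exists idM; split; [exact Hid| apply act_id]|].
  destruct Hu as [->|Hu]; [simpl; tauto|].
  destruct u as [x y]. unfold Cnorm2 in Hu; simpl in Hu.
  destruct (Hz (act (mkM a b c d) (Some (x,y)))) as [v [Hv Hv']];
    [exists (mkM a b c d); split; auto|].
  destruct (act_circle _ _ _ _ Hu Hv) as [HD HN]; simpl in HD, HN.
  assert (Hx : x = x1 \/ x = x2).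
  { destruct Hv' as [->|Hv'].
    - right. unfold Cnorm2 in HN; simpl in HN.
      assert (a*b <> 0).
      { intro E. apply Rmult_integral in E. apply (sq_nonzero a b x y Hu); [|lra].
        intro; apply Hab; nra. }
      unfold x2. field_simplify_eq; [nra|split; intro; apply H; subst; ring].
    - left. rewrite Hv' in HN. unfold x1.
      assert (be <> 0).
      { intro E. apply NE. split; [|exact E]. unfold be in E. assert (Hcd : c*d = a*b) by lra. transitivity (2*x*(c*d-a*b)); [lra | rewrite Hcd; ring]. }
      field_simplify_eq; [|auto]. unfold al, be. nra. }
  destruct Hx as [->| ->]; destruct (y_pm _ _ Hu) as [->| ->]; simpl; tauto.
Qed.

Fixpoint powM (A : M2) (n : nat) : M2 :=
  match n with O => idM | S n => mulM A (powM A n) end.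

Lemma powF1 a b n : exists p q, powM (mkM a b b a) n = mkM p q q p /\
  p + q = (a+b)^n /\ p - q = (a-b)^n.
Proof.
induction n as [|n [p [q [E [E1 E2]]]]].
- exists 1, 0. simpl. unfold idM. repeat split; ring.
- exists (a*p+b*q), (a*q+b*p). simpl. rewrite E. unfold mulM; simpl.
  split; [f_equal; ring|]. rewrite <- E1, <- E2. split; ring.
Qed.

Lemma pow_inj r : r <> 0 -> Rabs r <> 1 -> forall i j : nat, r^i = r^j -> i = j.
Proof.
intros H0 H1.
assert (K : forall i j, (i < j)%nat -> r^i <> r^j).
{ intros i j Hij E.
  replace j with (i + (j - i))%nat in E by lia. rewrite pow_add in E.
  assert (E' : r^(j-i) = 1).
  { apply (Rmult_eq_reg_l (r^i)); [|apply pow_nonzero; auto]. rewrite <- E; ring. }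
  assert (E'' : Rabs r ^ (j-i) = 1) by (rewrite RPow_abs, E'; apply Rabs_R1).
  destruct (Rlt_or_le (Rabs r) 1) as [L|L].
  - assert (Rabs r ^ (j-i) < 1); [apply pow_lt_1_compat; [split; [apply Rabs_pos|auto]|lia]|lra].
  - assert (1 < Rabs r) by lra.
    assert (1 < Rabs r ^ (j-i)); [apply Rlt_pow_R1; [auto|lia]|lra]. }
intros i j E. destruct (Nat.lt_trichotomy i j) as [L|[L|L]]; auto.
- exfalso; exact (K _ _ L E).
- exfalso; exact (K _ _ L (eq_sym E)).
Qed.

Lemma pow_div u v n : v <> 0 -> (u/v)^n = u^n/v^n.
Proof. intro H. induction n; simpl. field. rewrite IHn. field. split; auto. apply pow_nonzero; auto. Qed.

Definition fF1 (M : M2) : R := (ma M + mb M) / (ma M - mb M).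

Lemma F1_finite (S : M2 -> Prop) : is_PGL2Q_subgroup S -> PGL_finite S ->
  forall A, S A -> mc A = mb A -> md A = ma A -> ma A = 0 \/ mb A = 0.
Proof.
intros [Hrat [_ [Hid [Hmul Hinv]]]] [l Hl] A HA Hc Hd.
destruct (classic (ma A = 0 \/ mb A = 0)) as [H|H]; auto. exfalso.
assert (Ha : ma A <> 0) by tauto. assert (Hb : mb A <> 0) by tauto.
pose proof (proj2 (Hrat A HA)) as Hdet.
destruct A as [a b c d]; simpl in *; subst c d.
unfold detM in Hdet; simpl in Hdet.
assert (Hp : a + b <> 0) by (intro E; apply Hdet; assert (b = -a) by lra; subst; ring).
assert (Hm : a - b <> 0) by (intro E; apply Hdet; assert (b = a) by lra; subst; ring).
set (r := (a+b)/(a-b)).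
assert (Hr0 : r <> 0) by (unfold r; intro E; apply Hp; field_simplify_eq in E; auto).
assert (Hr1 : Rabs r <> 1).
{ unfold Rabs; destruct (Rcase_abs r); unfold r in *; intro E.
  - apply Ha. field_simplify_eq in E; auto. lra.
  - apply Hb. field_simplify_eq in E; auto. lra. }
assert (Hpow : forall n, S (powM (mkM a b b a) n)).
{ induction n; simpl; auto. }
assert (Hin : forall n, In (r ^ n) (map fF1 l)).
{ intro n. destruct (Hl _ (Hpow n)) as [B [HB [k [Hk EB]]]].
  apply in_map_iff. exists B; split; auto.
  destruct (powF1 a b n) as [p [q [E [E1 E2]]]]. rewrite E in EB. subst B.
  unfold fF1; simpl.
  assert (p - q <> 0) by (rewrite E2; apply pow_nonzero; auto).
  replace ((k*p + k*q)/(k*p - k*q)) with ((p+q)/(p-q)).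
  2:{ field. split; auto. replace (k*p-k*q) with (k*(p-q)) by ring. apply Rmult_integral_contrapositive; auto. }
  rewrite E1, E2. unfold r. rewrite pow_div by auto. reflexivity. }
assert (HN : NoDup (map (fun n => r ^ n) (seq 0 (Datatypes.S (length l))))).
{ apply FinFun.Injective_map_NoDup; [|apply seq_NoDup].
  intros i j E. exact (pow_inj r Hr0 Hr1 i j E). }
assert (incl (map (fun n => r ^ n) (seq 0 (Datatypes.S (length l)))) (map fF1 l)).
{ intros z Hz. apply in_map_iff in Hz. destruct Hz as [n [<- _]]. apply Hin. }
apply (NoDup_incl_length HN) in H0. rewrite !length_map, length_seq in H0. lia.
Qed.

Lemma prop_lem a b c d : a*d - b*c = 0 -> ~ (a = 0 /\ b = 0) -> ~ (c = 0 /\ d = 0) ->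
  exists k, k <> 0 /\ c = k*a /\ d = k*b.
Proof.
intros E H1 H2. destruct (Req_dec a 0) as [Ha|Ha].
- subst a. assert (Hb : b <> 0) by tauto.
  assert (Hc : c = 0).
  { assert (b*c = 0) by lra. apply Rmult_integral in H as [H|H]; [contradiction|auto]. }
  subst c. assert (Hd : d <> 0) by tauto.
  exists (d/b). split; [intro X; apply Hd; field_simplify_eq in X; auto|].
  split; [ring| field; auto].
- exists (c/a). assert (Hc : c <> 0).
  { intro; subst c. apply H2; split; auto.
    assert (a*d = 0) by lra. apply Rmult_integral in H as [H|H]; [contradiction|auto]. }
  split; [intro X; apply Hc; field_simplify_eq in X; auto|].
  split; [field; auto|]. apply (Rmult_eq_reg_l a); auto. field_simplify; auto. lra.
Qed.

Lemma F2_pair (S : M2 -> Prop) : is_PGL2Q_subgroup S -> PGL_finite S ->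
  forall a b c d, S (mkM a b (-b) (-a)) -> S (mkM c d (-d) (-c)) ->
  peq (mkM c d (-d) (-c)) (mkM a b (-b) (-a)) \/
  peq (mkM c d (-d) (-c)) (mkM b a (-a) (-b)).
Proof.
intros HG Hf a b c d HA HB.
pose proof HG as [Hrat [_ [Hid [Hmul Hinv]]]].
pose proof (proj2 (Hrat _ HA)) as DA. pose proof (proj2 (Hrat _ HB)) as DB.
unfold detM in DA, DB; simpl in DA, DB.
assert (NA : ~ (a = 0 /\ b = 0)) by (intros [-> ->]; apply DA; ring).
assert (NB : ~ (c = 0 /\ d = 0)) by (intros [-> ->]; apply DB; ring).
pose proof (F1_finite S HG Hf _ (Hmul _ _ HA HB)) as HF. simpl in HF.
destruct HF as [E|E]; try ring.
- right. destruct (prop_lem b a c d) as [k [Hk [-> ->]]]; [lra|tauto|auto|].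
  exists (/k); split; [apply Rinv_neq_0_compat; auto|].
  unfold scaleM; simpl. f_equal; field; auto.
- left. destruct (prop_lem a b c d) as [k [Hk [-> ->]]]; [lra|tauto|auto|].
  exists (/k); split; [apply Rinv_neq_0_compat; auto|].
  unfold scaleM; simpl. f_equal; field; auto.
Qed.

Lemma is_rat_1 : is_rat 1. Proof. exists 1%Q. unfold Q2R; simpl. field. Qed.
Lemma is_rat_0 : is_rat 0. Proof. exists 0%Q. unfold Q2R; simpl. field. Qed.

Theorem mainTheorem4 (S : M2 -> Prop) :
  is_PGL2Q_subgroup S -> PGL_finite S ->
  (O_infinite S <->
   exists a b : R, is_rat a /\ is_rat b /\ a ^ 2 <> b ^ 2 /\
     forall A, S A ->
       peq A idM \/ peq A (mkM 0 1 1 0) \/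
       peq A (mkM a b (- b) (- a)) \/ peq A (mkM b a (- a) (- b))).
Proof.
intros HG Hf. split.
2:{ intros [a [b [_ [_ [Hab HS]]]]]. exact (dir1 S a b Hab HS). }
intro Hinf.
pose proof HG as [Hrat [Hcl [Hid [Hmul Hinv]]]].
assert (F1c : forall A, S A -> mc A = mb A -> md A = ma A ->
   peq A idM \/ peq A (mkM 0 1 1 0)).
{ intros A HA Hc Hd. pose proof (proj2 (Hrat _ HA)) as DA.
  destruct A as [a b c d]; simpl in *; subst c d. unfold detM in DA; simpl in DA.
  destruct (F1_finite S HG Hf _ HA eq_refl eq_refl) as [E|E]; simpl in E; subst.
  - right. exists (/b). split.
    + apply Rinv_neq_0_compat. intro; subst; apply DA; ring.
    + unfold scaleM; simpl. f_equal; field; intro; subst; apply DA; ring.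
  - left. exists (/a). split.
    + apply Rinv_neq_0_compat. intro; subst; apply DA; ring.
    + unfold scaleM, idM; simpl. f_equal; field; intro; subst; apply DA; ring. }
destruct (classic (exists A0, S A0 /\ mc A0 = - mb A0 /\ md A0 = - ma A0)) as [[A0 [H0 [Hc0 Hd0]]]|N0].
- destruct A0 as [a b c d]; simpl in *; subst c d.
  pose proof (Hrat _ H0) as [[Ra [Rb _]] DA]. unfold detM in DA; simpl in DA.
  exists a, b. split; [auto|]. split; [auto|]. split.
  + intro E; apply DA. simpl in E. lra.
  + intros A HA. destruct (circle_pres S HG Hinf A HA) as [[Hc Hd]|[Hc Hd]].
    * destruct (F1c A HA Hc Hd); tauto.
    * destruct A as [c d e f]; simpl in *; subst e f.
      destruct (F2_pair S HG Hf a b c d H0 HA); tauto.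
- exists 1, 0. split; [apply is_rat_1|]. split; [apply is_rat_0|]. split; [simpl; lra|].
  intros A HA. destruct (circle_pres S HG Hinf A HA) as [[Hc Hd]|[Hc Hd]].
  + destruct (F1c A HA Hc Hd); tauto.
  + exfalso. apply N0. exists A; auto.
Qed.
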